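(* Let $\delta,\gamma\in\mathbb R$. For any pair of points $(\xi,\eta),(z_1,z_2)\in(0,\infty)\times\mathbb R$ there exists a smooth control $u:[0,1]\to\mathbb R$ such that the system \[ \tfrac{d}{dt}z_1(t)=-z_1(t)^4z_2(t),\qquad \tfrac{d}{dt}z_2(t)=\delta z_1(t)+2z_1(t)^3z_2(t)^2-\gamma z_1(t)^4z_2(t)+u(t) \] has a solution on $[0,1]$ with $z_1(0)=\xi$, $z_2(0)=\eta$, $z_1(1)=z_1$, $z_2(1)=z_2$ and $z_1(t)>0$ for all $t\in[0,1]$. *)

(* Defs.v *)
From Stdlib Require Import Reals.
Open Scope R_scope.

Fixpoint Cn (n : nat) (f : R -> R) : Prop :=
  match n with
  | O => continuity f
  | S m => exists f' : R -> R,
             (forall x, derivable_pt_lim f x (f' x)) /\ Cn m f'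
  end.

Definition smooth (f : R -> R) : Prop := forall n, Cn n f.

(* Main.v *)
Require Import Defs.
From Stdlib Require Import Reals Lra FunctionalExtensionality.
From Coquelicot Require Import Coquelicot.
Open Scope R_scope.

Lemma Cn_S n f : Cn (S n) f -> Cn n f.
Proof.
  revert f; induction n as [|n IH]; intros f [f' [Hd Hc]].
  - intro x. apply derivable_continuous_pt. exists (f' x). apply Hd.
  - exists f'. split; [exact Hd| apply IH; exact Hc].
Qed.

Lemma Cn_const n c : Cn n (fun _ => c).
Proof.
  revert c; induction n as [|n IH]; intro c.
  - intro x. apply continuity_const. intros a b; reflexivity.
  - exists (fun _ => 0). split; [intro x; apply derivable_pt_lim_const | apply IH].
Qed.

Lemma Cn_id n : Cn n (fun x => x).
Proof.
  destruct n as [|n].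
  - (intro x; apply derivable_continuous_pt, derivable_pt_id).
  - exists (fun _ => 1). split; [intro x; apply derivable_pt_lim_id | apply Cn_const].
Qed.

Lemma Cn_plus n f g : Cn n f -> Cn n g -> Cn n (fun x => f x + g x).
Proof.
  revert f g; induction n as [|n IH]; intros f g Hf Hg.
  - exact (continuity_plus f g Hf Hg).
  - destruct Hf as [f' [Hfd Hfc]]; destruct Hg as [g' [Hgd Hgc]].
    exists (fun x => f' x + g' x). split.
    + intro x. apply (derivable_pt_lim_plus f g); auto.
    + apply IH; auto.
Qed.

Lemma Cn_mult n f g : Cn n f -> Cn n g -> Cn n (fun x => f x * g x).
Proof.
  revert f g; induction n as [|n IH]; intros f g Hf Hg.
  - exact (continuity_mult f g Hf Hg).
  - pose proof (Cn_S _ _ Hf) as Hf0; pose proof (Cn_S _ _ Hg) as Hg0.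
    destruct Hf as [f' [Hfd Hfc]]; destruct Hg as [g' [Hgd Hgc]].
    exists (fun x => f' x * g x + f x * g' x). split.
    + intro x. apply (derivable_pt_lim_mult f g); auto.
    + apply Cn_plus; apply IH; auto.
Qed.

Lemma Cn_exp n f : Cn n f -> Cn n (fun x => exp (f x)).
Proof.
  revert f; induction n as [|n IH]; intros f Hf.
  - intro x. apply (continuity_pt_comp f exp). apply Hf.
    apply derivable_continuous_pt. apply derivable_pt_exp.
  - pose proof (Cn_S _ _ Hf) as Hf0.
    destruct Hf as [f' [Hfd Hfc]].
    exists (fun x => f' x * exp (f x)). split.
    + intro x.
      replace (f' x * exp (f x)) with (exp (f x) * f' x) by ring.
      apply (derivable_pt_lim_comp f exp); auto. apply derivable_pt_lim_exp.
    + apply Cn_mult; auto.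
Qed.

Lemma sm_const c : smooth (fun _ => c). Proof. intro; apply Cn_const. Qed.
Lemma sm_id : smooth (fun x => x). Proof. intro; apply Cn_id. Qed.
Lemma sm_plus f g : smooth f -> smooth g -> smooth (fun x => f x + g x).
Proof. intros; intro; apply Cn_plus; auto. Qed.
Lemma sm_mult f g : smooth f -> smooth g -> smooth (fun x => f x * g x).
Proof. intros; intro; apply Cn_mult; auto. Qed.
Lemma sm_exp f : smooth f -> smooth (fun x => exp (f x)).
Proof. intros; intro; apply Cn_exp; auto. Qed.
Lemma sm_minus f g : smooth f -> smooth g -> smooth (fun x => f x - g x).
Proof.
  intros Hf Hg.
  assert (E : (fun x => f x - g x) = (fun x => f x + (-1) * g x)).
  { apply functional_extensionality; intro; ring. }
  rewrite E. apply sm_plus; auto. apply sm_mult; auto. apply sm_const.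
Qed.

Theorem lemma4 (delta gamma xi eta zf1 zf2 : R) (hxi : 0 < xi) (hz : 0 < zf1) :
  exists u : R -> R, smooth u /\
  exists z1 z2 : R -> R,
    (forall t, 0 <= t <= 1 ->
       derivable_pt_lim z1 t (- (z1 t ^ 4 * z2 t)) /\
       derivable_pt_lim z2 t
         (delta * z1 t + 2 * z1 t ^ 3 * z2 t ^ 2 - gamma * z1 t ^ 4 * z2 t + u t)) /\
    z1 0 = xi /\ z2 0 = eta /\ z1 1 = zf1 /\ z2 1 = zf2 /\
    (forall t, 0 <= t <= 1 -> 0 < z1 t).
Proof.
  set (a := ln xi). set (b := - (xi ^ 3 * eta)).
  set (A := ln zf1 - a - b). set (B := - (zf1 ^ 3 * zf2) - b).
  set (d := B - 2 * A). set (c := 3 * A - B).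
  set (p := fun t => a + b * t + c * (t * t) + d * (t * t * t)).
  set (p1 := fun t => b + 2 * c * t + 3 * d * (t * t)).
  set (p2 := fun t => 2 * c + 6 * d * t).
  assert (Hp : forall t, derivable_pt_lim p t (p1 t)).
  { intro t. apply is_derive_Reals. unfold p, p1. auto_derive; auto. ring. }
  assert (Hp1 : forall t, derivable_pt_lim p1 t (p2 t)).
  { intro t. apply is_derive_Reals. unfold p1, p2. auto_derive; auto. ring. }
  assert (smp : smooth p).
  { unfold p. repeat apply sm_plus; repeat apply sm_mult; try apply sm_const; apply sm_id. }
  assert (smp1 : smooth p1).
  { unfold p1. repeat apply sm_plus; repeat apply sm_mult; try apply sm_const; apply sm_id. }
  assert (smp2 : smooth p2).
  { unfold p2. repeat apply sm_plus; repeat apply sm_mult; try apply sm_const; apply sm_id. }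
  exists (fun t => (p1 t * p1 t - p2 t) * exp (-3 * p t) - (delta + gamma * p1 t) * exp (p t)).
  split.
  { apply sm_minus; apply sm_mult.
    - apply sm_minus; auto. apply sm_mult; auto.
    - apply sm_exp. apply sm_mult; auto. apply sm_const.
    - apply sm_plus. apply sm_const. apply sm_mult; auto. apply sm_const.
    - apply sm_exp; auto. }
  exists (fun t => exp (p t)), (fun t => - p1 t * exp (-3 * p t)).
  assert (K : forall t, exp (-3 * p t) = / exp (p t) ^ 3).
  { intro t. replace (-3 * p t) with (- (p t + p t + p t)) by ring.
    rewrite exp_Ropp, !exp_plus. simpl. f_equal. ring. }
  assert (P0 : p 0 = a) by (unfold p; ring).
  assert (P1 : p 1 = ln zf1) by (unfold p, d, c, A; ring).
  assert (Q0 : p1 0 = b) by (unfold p1; ring).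
  assert (Q1 : p1 1 = - (zf1 ^ 3 * zf2)) by (unfold p1, d, c, A, B; ring).
  split; [|split; [|split; [|split; [|split]]]].
  - intros t _. pose proof (exp_pos (p t)) as Ep. split.
    + replace (- (exp (p t) ^ 4 * (- p1 t * exp (-3 * p t)))) with (exp (p t) * p1 t).
      * apply (derivable_pt_lim_comp p exp); auto. apply derivable_pt_lim_exp.
      * rewrite K. field. lra.
    + assert (D3 : derivable_pt_lim (fun t => -3 * p t) t (-3 * p1 t)).
      { replace (-3 * p1 t) with (0 * p t + -3 * p1 t) by ring.
        apply (derivable_pt_lim_mult (fun _ => -3) p). apply derivable_pt_lim_const. auto. }
      assert (DE : derivable_pt_lim (fun t => exp (-3 * p t)) t (exp (-3 * p t) * (-3 * p1 t))).
      { apply (derivable_pt_lim_comp (fun t => -3 * p t) exp); auto. apply derivable_pt_lim_exp. }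
      assert (DN : derivable_pt_lim (fun t => - p1 t) t (- p2 t)).
      { apply (derivable_pt_lim_opp p1). auto. }
      pose proof (derivable_pt_lim_mult (fun t => - p1 t) (fun t => exp (-3 * p t)) t _ _ DN DE) as DM.
      match goal with |- derivable_pt_lim _ _ ?L => replace L with
        (- p2 t * exp (-3 * p t) + - p1 t * (exp (-3 * p t) * (-3 * p1 t))) end.
      * exact DM.
      * rewrite !K. field. lra.
  - cbv beta. rewrite P0. unfold a. apply exp_ln. lra.
  - cbv beta. rewrite K, P0, Q0. unfold a, b. rewrite exp_ln by lra. field. lra.
  - cbv beta. rewrite P1. apply exp_ln. lra.
  - cbv beta. rewrite K, P1, Q1. rewrite exp_ln by lra. field. lra.
  - intros t _. apply exp_pos.
Qed.
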